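(* Let $(X,\mathcal{A})$ be a resolvable design, let $z\geq 2$, and let $\mathcal{P}_1,\dots,\mathcal{P}_z$ be $z$ distinct parallel classes. For each $s\in[z]$ choose two distinct blocks $C_{s,i_s},C_{s,j_s}\in\mathcal{P}_s$. Let $\mathcal{X}$ be the set of $2^z$ users, where the user indexed by $(a_1,\dots,a_z)$ with $a_s\in\{i_s,j_s\}$ has accessible point set $Y_{(a_1,\dots,a_z)}=C_{1,a_1}\cup\cdots\cup C_{z,a_z}$. For a user $m=(a_1,\dots,a_z)\in\mathcal{X}$ let $e_s$ denote the element of $\{i_s,j_s\}\setminus\{a_s\}$ and $f_m=C_{1,e_1}\cap\cdots\cap C_{z,e_z}$. Then for every $m\in\mathcal{X}$, $$f_m=\bigcap_{t\in\mathcal{X}\setminus\{m\}}Y_t.$$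
   Context: A resolvable design $(X,\mathcal{A})$: $X$ a finite set of points, $\mathcal{A}$ a collection of blocks (subsets of $X$ of a common size) partitioned into parallel classes, each parallel class being a set of pairwise disjoint blocks whose union is $X$. *)

(* Defs.v *)
From mathcomp Require Import all_boot.
Set Implicit Arguments. Unset Strict Implicit. Unset Printing Implicit Defensive.

(* A resolvable design on the finite point set T, given by its set R of
   parallel classes; the block collection is the union of the classes. *)
Definition resolvable_design (T : finType) (R : {set {set {set T}}}) : Prop :=
  (forall P, P \in R -> partition P [set: T]) /\
  exists k, forall P B, P \in R -> B \in P -> #|B| = k.

(* Users are indexed by u : {ffun 'I_z -> bool}; u s = false means a_s = i_s
   (block Ci s), u s = true means a_s = j_s (block Cj s). *)
Definition user_block (T : finType) (z : nat) (Ci Cj : 'I_z -> {set T})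
  (u : {ffun 'I_z -> bool}) (s : 'I_z) : {set T} :=
  if u s then Cj s else Ci s.

Definition other_block (T : finType) (z : nat) (Ci Cj : 'I_z -> {set T})
  (u : {ffun 'I_z -> bool}) (s : 'I_z) : {set T} :=
  if u s then Ci s else Cj s.

Definition Yset (T : finType) (z : nat) (Ci Cj : 'I_z -> {set T})
  (u : {ffun 'I_z -> bool}) : {set T} :=
  \bigcup_(s < z) user_block Ci Cj u s.

Definition fset_user (T : finType) (z : nat) (Ci Cj : 'I_z -> {set T})
  (u : {ffun 'I_z -> bool}) : {set T} :=
  \bigcap_(s < z) other_block Ci Cj u s.

(* Main.v *)
Require Import Defs.
From mathcomp Require Import all_boot.

Theorem lemma6 (T : finType) (R : {set {set {set T}}}) (z : nat)
  (P : 'I_z -> {set {set T}}) (Ci Cj : 'I_z -> {set T}) :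
  resolvable_design R ->
  2 <= z ->
  injective P ->
  (forall s, P s \in R) ->
  (forall s, Ci s \in P s) ->
  (forall s, Cj s \in P s) ->
  (forall s, Ci s != Cj s) ->
  forall m : {ffun 'I_z -> bool},
    fset_user Ci Cj m = \bigcap_(t : {ffun 'I_z -> bool} | t != m) Yset Ci Cj t.
Proof.
move=> [hpart _] _ _ hR hi hj hij m.
have disj : forall s x, x \in Ci s -> x \in Cj s -> False.
  move=> s x xi xj.
  have /and3P [_ tI _] := hpart _ (hR s).
  have := trivIsetP tI _ _ (hi s) (hj s) (hij s).
  by move/disjointFr => /(_ x xi); rewrite xj.
apply/setP => x; apply/idP/idP.
- move/bigcapP => H; apply/bigcapP => t tm.
  case: (pickP (fun s => t s != m s)) => [s hs|H0]; last first.
    suff tm' : t = m by rewrite tm' eqxx in tm.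
    by apply/ffunP => s; move/negbFE/eqP: (H0 s).
  apply/bigcupP; exists s => //.
  have := H s isT; rewrite /user_block /other_block.
  by move: hs; case: (t s); case: (m s).
- move/bigcapP => H; apply/bigcapP => s0 _.
  apply/negPn/negP => hx.
  pose t := [ffun s => if s == s0 then ~~ m s0 else (x \in Ci s)].
  have tm : t != m.
    apply/eqP => /ffunP /(_ s0); rewrite ffunE eqxx.
    by case: (m s0).
  have /bigcupP [s _] := H t tm.
  rewrite /user_block ffunE.
  case: eqP => [->|ns].
    by move: hx; rewrite /other_block; case: (m s0) => /= /negP.
  case xi: (x \in Ci s) => //; last by rewrite xi.
  by move=> xj; apply: (disj s x).
Qed.
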